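(* The weight matrices $W_H$, $W_L$ and $W_J$ are irreducible.
   Context: A weight matrix $W$ of size $N$ is reducible if there is a constant invertible matrix $M$ such that $MW(x)M^*$ is block diagonal with at least two blocks of smaller size for all $x$; otherwise irreducible. Classical scalar weights: Hermite $w_b(x)=e^{-x^2+2bx}$ on $\mathbb R$; Laguerre $w_\alpha(x)=e^{-x}x^\alpha$ on $(0,\infty)$, $\alpha>-1$; Jacobi $w_{\alpha,\beta}(x)=(1-x)^\alpha(1+x)^\beta$ on $(-1,1)$, $\alpha,\beta>-1$. Let $N\ge2$, $A=\sum_{j=1}^{\lfloor N/2\rfloor}a_{2j-1}E_{2j-1,2j}+\sum_{j=1}^{\lfloor (N-1)/2\rfloor}a_{2j}E_{2j+1,2j}$ ($E_{s,t}$ matrix units, all $a_j\in\mathbb R\setminus\{0\}$), $T(x)=I+Ax$. $W_H=T\,\mathrm{diag}(w_{b_1},\dots,w_{b_N})\,T^*$ with $b_i$ pairwise distinct reals; $W_L=T\,\mathrm{diag}(w_{\alpha_1},\dots,w_{\alpha_N})\,T^*$ with $\alpha_i-\alpha_j\notin\mathbb Z$ for $i\ne j$; $W_J=T\,\mathrm{diag}(w_{\alpha_1,\beta_1},\dots,w_{\alpha_N,\beta_N})\,T^*$ with, for $i\ne j$, $\alpha_i-\alpha_j\notin\mathbb Z$ or $\beta_i-\beta_j\notin\mathbb Z$, and $\alpha_1+\beta_1=\alpha_j+\beta_j+1+(-1)^j$ for all $j$. *)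

(* Defs.v *)
From HB Require Import structures.
From mathcomp Require Import all_boot all_order all_algebra.
From mathcomp Require Import all_classical all_reals.
From mathcomp Require Import all_analysis.
From mathcomp Require Import complex.
Set Implicit Arguments. Unset Strict Implicit. Unset Printing Implicit Defensive.
Import Order.TTheory GRing.Theory Num.Theory.
Local Open Scope ring_scope.

Definition adjmx (R : rcfType) (n : nat) (M : 'M[R[i]]_n) : 'M[R[i]]_n :=
  (map_mx (@conjc R) M)^T.

(* W is reducible if there is a constant invertible
   complex matrix M such that M W(x) M^* is block diagonal with at least two
   blocks of smaller size for all x in the support: i.e. there is a split
   point 0 < k < N with all entries of the off-diagonal blocks equal to 0. *)
Definition reducible (R : rcfType) (N : nat) (I : R -> Prop)
  (W : R -> 'M[R]_N) : Prop :=
  exists M : 'M[R[i]]_N, M \in unitmx /\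
  exists k : nat, (0 < k < N)%N /\
   forall x, I x -> forall i j : 'I_N, (i < k)%N != (j < k)%N ->
     (M *m map_mx (fun r : R => real_complex R r) (W x) *m adjmx M) i j = 0.

Definition irreducible_weight (R : rcfType) (N : nat) (I : R -> Prop)
  (W : R -> 'M[R]_N) : Prop := ~ reducible I W.

(* The matrix A (0-based indices): for 1-based (s,t),
   A_{2j-1,2j} = a_{2j-1},  A_{2j+1,2j} = a_{2j}. *)
Definition Amat (R : pzRingType) (N : nat) (a : nat -> R) : 'M[R]_N :=
  \matrix_(i < N, j < N)
    if ~~ odd i && (j == i.+1 :> nat) then a i.+1
    else if ~~ odd i && (0 < i)%N && (j.+1 == i :> nat) then a (nat_of_ord i)
    else 0.

Definition Tmat (R : pzRingType) (N : nat) (a : nat -> R) (x : R) : 'M[R]_N :=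
  1%:M + x *: Amat N a.

Definition Wmat (R : comPzRingType) (N : nat) (a : nat -> R)
  (w : 'I_N -> R -> R) (x : R) : 'M[R]_N :=
  Tmat N a x *m diag_mx (\row_k w k x) *m (Tmat N a x)^T.

Definition hermite_w (R : realType) (b x : R) : R := expR (- x ^+ 2 + 2 * b * x).
Definition laguerre_w (R : realType) (al x : R) : R := expR (- x) * powR x al.
Definition jacobi_w (R : realType) (al be x : R) : R :=
  powR (1 - x) al * powR (1 + x) be.

Definition is_integer (R : pzRingType) (x : R) : Prop := exists z : int, x = z%:~R.

(* Main.v *)
Require Import Defs.
From HB Require Import structures.
From mathcomp Require Import all_boot all_order all_algebra.
From mathcomp Require Import all_classical all_reals.
From mathcomp Require Import all_analysis.
From mathcomp Require Import complex.
From mathcomp.algebra_tactics Require Import ring lra.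
Set Implicit Arguments. Unset Strict Implicit. Unset Printing Implicit Defensive.
Import Order.TTheory GRing.Theory Num.Theory.
Local Open Scope ring_scope.
Import numFieldNormedType.Exports.
Local Open Scope classical_set_scope.
Local Open Scope ring_scope.
Lemma seq_max (T : eqType) (lt : rel T) (s : seq T) :
  (forall x y z, lt x y -> lt y z -> lt x z) ->
  (forall x y, x != y -> lt x y || lt y x) ->
  s != [::] -> exists2 m, m \in s & forall x, x \in s -> x != m -> lt x m.
Proof.
move=> tr tot; elim: s => [//|a s IH] _.
have [->|sn] := eqVneq s [::].
  by exists a; rewrite ?mem_head // => x; rewrite inE => /eqP ->; rewrite eqxx.
have [m ms Hm] := IH sn.
have [am|am] := eqVneq a m.
  exists m; first by rewrite inE ms orbT.
  by move=> x; rewrite inE => /orP[/eqP->|]; [rewrite am eqxx|exact: Hm].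
have /orP[lam|lma] := tot _ _ am.
  exists m; first by rewrite inE ms orbT.
  by move=> x; rewrite inE => /orP[/eqP->|] //; exact: Hm.
exists a; first exact: mem_head.
move=> x; rewrite inE => /orP[/eqP->|xs]; first by rewrite eqxx.
move=> xa; have [xm|xm] := eqVneq x m; first by rewrite xm.
exact: tr (Hm _ xs xm) lma.
Qed.

Lemma cvg_ev_cst (R : realFieldType) (T : Type) (F : set_system T) (FF : Filter F)
  (f : T -> R) (c : R) :
  (\forall x \near F, f x = c) -> f x @[x --> F] --> (c : R).
Proof.
move=> H; apply: cvg_trans (@cvg_cst R c T F FF).
apply: near_eq_cvg; near=> x; by rewrite (near H x).
Unshelve. all: by end_near. Qed.

Lemma indep_max (R : realType) (I : finType) (g : I -> R -> R) (d : I -> R)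
  (lt : rel I) :
  (forall x y z, lt x y -> lt y z -> lt x z) ->
  (forall x y, x != y -> lt x y || lt y x) ->
  (forall i, \forall x \near +oo, g i x != 0) ->
  (forall i j, lt i j -> g i x / g j x @[x --> +oo] --> 0) ->
  (\forall x \near +oo, \sum_i d i * g i x = 0) ->
  forall i, d i = 0.
Proof.
move=> tr tot gnz rat H i0; apply/eqP/negPn/negP => di0.
set s := [seq i <- enum I | d i != 0].
have sn : s != [::].
  apply/eqP => s0; have : i0 \in s by rewrite mem_filter di0 mem_enum.
  by rewrite s0.
have [m ms Hm] := seq_max tr tot sn.
have dm : d m != 0 by move: ms; rewrite mem_filter => /andP[].
have c1 : \sum_i d i * (g i x / g m x) @[x --> +oo] -->
          \sum_i (if i == m then d m else 0).
  apply: cvg_big => // [|i _]; first exact: add_continuous.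
  have [->|im] := eqVneq i m.
    apply: cvg_ev_cst.
    by near=> x; rewrite divff ?mulr1 //; near: x; exact: gnz.
  have [di|di] := eqVneq (d i) 0.
    apply: cvg_ev_cst.
    by near=> x; rewrite di mul0r.
  have : lt i m by apply: Hm => //; rewrite mem_filter di mem_enum.
  move=> /rat Hr; rewrite -(mulr0 (d i)); exact: cvgMr Hr.
rewrite -big_mkcond /= big_pred1_eq in c1.
have c2 : \sum_i d i * (g i x / g m x) @[x --> +oo] --> (0:R).
  apply: cvg_ev_cst.
  near=> x; rewrite -[RHS](mul0r ((g m x)^-1)).
  have -> : \sum_i d i * (g i x / g m x) = (\sum_i d i * g i x) / g m x.
    by rewrite mulr_suml; apply: eq_bigr => i _; rewrite mulrA.
  by congr (_ * _); near: x.
by move/eqP: dm; apply; apply: (cvg_unique (@Rhausdorff R) c1 c2).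
Unshelve. all: by end_near. Qed.

Lemma cvg0_ev (R : realType) (f : R -> R) :
  (forall eps : R, 0 < eps -> exists M : R, forall x, M < x -> `|f x| <= eps) ->
  f x @[x --> +oo] --> (0:R).
Proof.
move=> H; apply/cvgrPdist_le => eps ep; have [M HM] := H eps ep.
exists M; split; first exact: num_real.
by move=> x Mx; rewrite sub0r normrN; exact: HM.
Qed.

Lemma powR_ratio (R : realType) (a b : R) : a < b ->
  x `^ a / x `^ b @[x --> +oo] --> (0:R).
Proof.
move=> ab; apply: cvg0_ev => eps ep.
set e := a - b.
have e0 : 0 < - e by rewrite /e opprB subr_gt0.
exists (eps `^ e^-1) => x Mx.
have x0 : 0 < x := lt_trans (powR_gt0 _ ep) Mx.
rewrite -powRB; last by apply/implyP => _; rewrite gt_eqF.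
rewrite ger0_norm ?powR_ge0 // -/e -[e]opprK powRN.
rewrite -[eps]invrK lef_pV2 ?posrE ?invr_gt0 ?powR_gt0 //.
have -> : eps^-1 = (eps `^ e^-1) `^ (- e).
  rewrite -powRrM mulrN mulVf; last by rewrite -oppr_eq0 gt_eqF.
  by rewrite powR_inv1 // ltW.
apply: ltW; apply: gt0_ltr_powR => //; rewrite ?inE /= ?powR_ge0 //.
- by rewrite nnegrE powR_ge0.
- by rewrite nnegrE ltW.
Qed.

Lemma herm_ratio1 (R : realType) (l l' : R) (j j' : nat) : l < l' ->
  x ^+ j * expR (l * x) / (x ^+ j' * expR (l' * x)) @[x --> +oo] --> (0:R).
Proof.
move=> ll; apply: cvg0_ev => eps ep.
set d := l' - l.
have d0 : 0 < d by rewrite subr_gt0.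
set F : R := (j.+1)`!%:R.
have F0 : 0 < F by rewrite ltr0n fact_gt0.
set D := d ^+ j.+1.
have D0 : 0 < D by rewrite exprn_gt0.
exists (Num.max 1 (F / (D * eps))) => x.
rewrite gt_max => /andP[x1 xK].
have x0 : 0 < x by apply: lt_trans x1.
have xj' : 1 <= x ^+ j' by rewrite exprn_ege1 // ltW.
have xj0 : 0 < x ^+ j by rewrite exprn_gt0.
have eq1 : x ^+ j * expR (l * x) / (x ^+ j' * expR (l' * x)) =
    (x ^+ j / expR (d * x)) / x ^+ j'.
  have -> : l' * x = l * x + d * x by rewrite /d; ring.
  rewrite expRD; field.
  by rewrite !gt_eqF ?expR_gt0 ?exprn_gt0.
rewrite eq1 ger0_norm; last by rewrite !divr_ge0 ?expR_ge0 ?exprn_ge0 ?ltW.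
have y0 : 0 <= x ^+ j / expR (d * x) by rewrite divr_ge0 ?expR_ge0 ?ltW.
apply: le_trans (_ : x ^+ j / expR (d * x) <= _).
  rewrite ler_pdivrMr ?exprn_gt0 //; exact: ler_peMr.
have dx0 : 0 <= d * x by rewrite mulr_ge0 ?ltW.
have hexp := expR_ge1Dxn j dx0.
have Pp : 0 < (d * x) ^+ j.+1 / F by rewrite divr_gt0 ?exprn_gt0 ?mulr_gt0.
have hexp' : (d * x) ^+ j.+1 / F <= expR (d * x) by lra.
rewrite ler_pdivrMr ?expR_gt0 //.
apply: le_trans (_ : eps * ((d * x) ^+ j.+1 / F) <= _); last first.
  by rewrite ler_pM2l.
rewrite exprMn -/D exprS.
have : F / (D * eps) < x by [].
rewrite ltr_pdivrMr ?mulr_gt0 // => hx.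
rewrite -(ler_pM2r F0) -!mulrA mulVf ?gt_eqF // mulr1.
have : 0 <= x ^+ j by exact: ltW.
nra.
Qed.

Lemma herm_ratio2 (R : realType) (l : R) (j j' : nat) : (j < j')%N ->
  x ^+ j * expR (l * x) / (x ^+ j' * expR (l * x)) @[x --> +oo] --> (0:R).
Proof.
move=> jj; apply: cvg0_ev => eps ep.
exists (Num.max 1 eps^-1) => x.
rewrite gt_max => /andP[x1 xK].
have x0 : 0 < x by apply: lt_trans x1.
have -> : x ^+ j * expR (l * x) / (x ^+ j' * expR (l * x)) = (x ^+ (j' - j))^-1.
  have -> : j' = ((j' - j) + j)%N by rewrite subnK // ltnW.
  rewrite addnK exprD; field.
  by rewrite !gt_eqF ?expR_gt0 ?exprn_gt0.
rewrite ger0_norm ?invr_ge0 ?exprn_ge0 ?ltW //.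
have h1 : x <= x ^+ (j' - j).
  have : (0 < j' - j)%N by rewrite subn_gt0.
  case: (j' - j)%N => // k _; rewrite exprS; apply: ler_peMr; first exact: ltW.
  by rewrite exprn_ege1 // ltW.
rewrite -[eps]invrK ltf_pV2 ?posrE ?invr_gt0 ?exprn_gt0 //.
exact: lt_le_trans h1.
Qed.

Lemma pow_indep (R : realType) (I : finType) (g : I -> R) (d : I -> R) :
  injective g ->
  (forall t, 0 < t -> \sum_i d i * t `^ (g i) = 0) -> forall i, d i = 0.
Proof.
move=> ginj H; apply: (@indep_max R I (fun i t => t `^ (g i)) d
   (fun i j => g i < g j)).
- by move=> x y z; apply: lt_trans.
- move=> x y xy; have : g x != g y by apply: contra xy => /eqP /ginj ->.
  by rewrite neq_lt.
- move=> i; exists 0; split => // t t0; by rewrite gt_eqF ?powR_gt0.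
- move=> i j; exact: powR_ratio.
- by exists 0; split => // t t0; apply: H.
Qed.

Lemma polypow_indep (R : realType) (n D : nat) (al : 'I_n -> R) (c : 'I_n -> 'I_D -> R) :
  (forall k l, k != l -> ~ is_integer (al k - al l)) ->
  (forall t, 0 < t -> \sum_l (\sum_j c l j * t ^+ j) * t `^ (al l) = 0) ->
  forall l j, c l j = 0.
Proof.
move=> nint H l j.
pose g (p : 'I_n * 'I_D) := al p.1 + (p.2 : nat)%:R.
have ginj : injective g.
  move=> [k i] [k' i']; rewrite /g /= => e.
  have [kk|kk] := eqVneq k k'.
    subst k'; move/addrI/eqP: e; rewrite eqr_nat => /eqP e.
    by congr pair; apply: val_inj.
  exfalso; apply: (nint _ _ kk); exists (i'%:Z - i%:Z).
  have -> : ((i'%:Z - i%:Z)%:~R : R) = i'%:R - i%:R by rewrite rmorphB.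
  lra.
have := @pow_indep R _ g (fun p => c p.1 p.2) ginj.
move=> /(_ _ (l, j)); apply => t t0.
have -> : \sum_p c p.1 p.2 * t `^ g p = \sum_k \sum_i c k i * t `^ g (k, i).
  by rewrite pair_bigA; apply: eq_bigr => -[].
rewrite -[RHS](H t t0).
apply: eq_bigr => k _; rewrite mulr_suml; apply: eq_bigr => i _.
rewrite /g powRD; last by apply/implyP => _; rewrite gt_eqF.
by rewrite /= powR_mulrn ?ltW //; ring.
Qed.

Lemma polyexp_indep (R : realType) (n D : nat) (la : 'I_n -> R) (c : 'I_n -> 'I_D -> R) :
  injective la ->
  (forall x, \sum_l (\sum_j c l j * x ^+ j) * expR (la l * x) = 0) ->
  forall l j, c l j = 0.
Proof.
move=> linj H l j.
have := @indep_max R _ (fun (p : 'I_n * 'I_D) x => x ^+ (p.2 : nat) * expR (la p.1 * x))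
  (fun p => c p.1 p.2)
  (fun (p q : 'I_n * 'I_D) => (la p.1 < la q.1) || ((la p.1 == la q.1) && (p.2 < q.2)%N)).
move=> /(_ _ _ _ _ _ (l, j)); apply.
- move=> [x1 x2] [y1 y2] [z1 z2] /=.
  case/orP=> [h1|/andP[/eqP h1 h2]]; case/orP=> [h3|/andP[/eqP h3 h4]].
  + by rewrite (lt_trans h1 h3).
  + by rewrite -h3 h1.
  + by rewrite h1 h3.
  + by rewrite h1 h3 eqxx (ltn_trans h2 h4) orbT.
- move=> [x1 x2] [y1 y2] /= xy.
  have [e|ne] := eqVneq (la x1) (la y1).
    have e1 := linj _ _ e; subst y1.
    have x2y2 : x2 != y2 by apply: contra xy => /eqP ->.
    by rewrite ltxx /=; rewrite neq_ltn in x2y2; case/orP: x2y2 => ->; rewrite ?orbT.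
  by move: ne; rewrite neq_lt => /orP[->|->]; rewrite ?orbT.
- move=> p; exists 0; split => // x x0.
  by rewrite mulf_neq0 ?gt_eqF ?expR_gt0 ?exprn_gt0.
- move=> [x1 x2] [y1 y2] /= /orP[h|/andP[/eqP e h]].
    exact: herm_ratio1.
  rewrite -e; exact: herm_ratio2.
- exists 0; split => // x _.
  have -> : \sum_p c p.1 p.2 * (x ^+ (p.2 : nat) * expR (la p.1 * x)) =
     \sum_k \sum_i c k i * (x ^+ i * expR (la k * x)).
    by rewrite pair_bigA; apply: eq_bigr => -[].
  rewrite -[RHS](H x).
  apply: eq_bigr => k _; rewrite mulr_suml; apply: eq_bigr => i _.
  by rewrite mulrA.
Qed.

Definition indep3 (R : realType) (N : nat) (I : R -> Prop) (w : 'I_N -> R -> R) :=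
  forall c0 c1 c2 : 'I_N -> R,
  (forall x, I x -> \sum_l (c0 l + c1 l * x + c2 l * x ^+ 2) * w l x = 0) ->
  forall l, c0 l = 0 /\ c1 l = 0 /\ c2 l = 0.

Lemma sum3 (R : realType) (a b c x : R) :
  \sum_(j < 3) nth 0 [:: a; b; c] j * x ^+ j = a + b * x + c * x ^+ 2.
Proof. by rewrite !big_ord_recl big_ord0 /= expr0 expr1 mulr1 addr0 addrA. Qed.

Lemma from3 (R : realType) (a b c : R) :
  (forall j : 'I_3, nth 0 [:: a; b; c] j = 0) -> a = 0 /\ b = 0 /\ c = 0.
Proof.
move=> H; split; first exact: (H (@Ordinal 3 0 isT)).
split; first exact: (H (@Ordinal 3 1 isT)).
exact: (H (@Ordinal 3 2 isT)).
Qed.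

Lemma hermite_indep3 (R : realType) (N : nat) (b : 'I_N -> R) : injective b ->
  indep3 (fun _ => True) (fun k x => hermite_w (b k) x).
Proof.
move=> binj c0 c1 c2 H l; apply: from3.
apply: (@polyexp_indep R N 3 (fun k => 2 * b k)
  (fun k j => nth 0 [:: c0 k; c1 k; c2 k] j)).
  move=> x y /= e; apply: binj; apply: (mulfI (_ : 2 != 0)) => //; by rewrite pnatr_eq0.
move=> x.
have : expR (- x ^+ 2) * \sum_l (\sum_(j < 3) nth 0 [:: c0 l; c1 l; c2 l] j * x ^+ j)
          * expR (2 * b l * x) = 0.
  rewrite -[RHS](H x) // mulr_sumr; apply: eq_bigr => k _.
  by rewrite sum3 /hermite_w expRD; ring.
by move/eqP; rewrite mulf_eq0 gt_eqF ?expR_gt0 //= => /eqP.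
Qed.

Lemma laguerre_indep3 (R : realType) (N : nat) (al : 'I_N -> R) :
  (forall k l : 'I_N, k != l -> ~ is_integer (al k - al l)) ->
  indep3 (fun x => 0 < x) (fun k x => laguerre_w (al k) x).
Proof.
move=> nint c0 c1 c2 H l; apply: from3.
apply: (@polypow_indep R N 3 al (fun k j => nth 0 [:: c0 k; c1 k; c2 k] j) nint).
move=> x x0.
have : expR (- x) * \sum_l (\sum_(j < 3) nth 0 [:: c0 l; c1 l; c2 l] j * x ^+ j)
          * x `^ al l = 0.
  rewrite -[RHS](H x) // mulr_sumr; apply: eq_bigr => k _.
  by rewrite sum3 /laguerre_w; ring.
by move/eqP; rewrite mulf_eq0 gt_eqF ?expR_gt0 //= => /eqP.
Qed.

Lemma powRexp (R : realType) (a y : R) : 0 < a -> a `^ y = expR (y * ln a).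
Proof. by move=> a0; rewrite /powR gt_eqF. Qed.

Lemma jac_term (R : realType) (al S c0 c1 c2 t : R) (K : nat) : 0 < t ->
  let x := (1 - t) / (1 + t) in
  (c0 + c1 * x + c2 * x ^+ 2) * jacobi_w al (S - al - K%:R) x *
    ((1 + t) ^+ 2 * (1 + t) `^ S) =
  2 `^ (S - K%:R) * (1 + t) ^+ K *
    (c0 * (1 + t) ^+ 2 + c1 * (1 - t) * (1 + t) + c2 * (1 - t) ^+ 2) * t `^ al.
Proof.
move=> t0 x.
have t1 : 0 < 1 + t by lra.
have t1n : 1 + t != 0 by rewrite gt_eqF.
have ex1 : 1 - x = 2 * t / (1 + t) by rewrite /x; field.
have ex2 : 1 + x = 2 / (1 + t) by rewrite /x; field.
have h2 : (0:R) < 2 by [].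
have p2 : (2:R) \in Num.pos by rewrite posrE.
have pt : t \in Num.pos by rewrite posrE.
have pt1 : 1 + t \in Num.pos by rewrite posrE.
have pti : (1 + t)^-1 \in Num.pos by rewrite posrE invr_gt0.
have p2t : 2 * t \in Num.pos by rewrite posrE mulr_gt0.
rewrite /jacobi_w ex1 ex2.
rewrite (powRexp _ (_ : 0 < 2 * t / (1 + t))); last by rewrite divr_gt0 ?mulr_gt0.
rewrite (powRexp _ (_ : 0 < 2 / (1 + t))); last by rewrite divr_gt0.
rewrite (powRexp _ t1) (powRexp _ h2) (powRexp _ t0).
rewrite (lnM p2t pti) (lnM p2 pt) (lnM p2 pti) (lnV pt1).
have -> : (1 + t) ^+ K = expR (K%:R * ln (1 + t)) by rewrite expRM_natl lnK.
have p : (c0 + c1 * x + c2 * x ^+ 2) * (1 + t) ^+ 2 =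
   c0 * (1 + t) ^+ 2 + c1 * (1 - t) * (1 + t) + c2 * (1 - t) ^+ 2.
  by rewrite /x; field.
have e : expR (al * (ln 2 + ln t + - ln (1 + t))) *
         expR ((S - al - K%:R) * (ln 2 + - ln (1 + t))) * expR (S * ln (1 + t)) =
         expR ((S - K%:R) * ln 2) * expR (K%:R * ln (1 + t)) * expR (al * ln t).
  by rewrite -!expRD; congr expR; ring.
transitivity (((c0 + c1 * x + c2 * x ^+ 2) * (1 + t) ^+ 2) *
  (expR (al * (ln 2 + ln t + - ln (1 + t))) *
   expR ((S - al - K%:R) * (ln 2 + - ln (1 + t))) * expR (S * ln (1 + t)))).
  ring.
rewrite p e; ring.
Qed.

Lemma sum5 (R : realType) (a0 a1 a2 a3 a4 x : R) :
  \sum_(j < 5) nth 0 [:: a0; a1; a2; a3; a4] j * x ^+ j =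
  a0 + a1 * x + a2 * x ^+ 2 + a3 * x ^+ 3 + a4 * x ^+ 4.
Proof. rewrite !big_ord_recl big_ord0 /= expr0 expr1 mulr1 addr0 !addrA //. Qed.

Lemma jacobi_indep3 (R : realType) (N : nat) (al be : 'I_N -> R) :
  (forall k l : 'I_N, k != l ->
        ~ is_integer (al k - al l) \/ ~ is_integer (be k - be l)) ->
  (forall k0 k : 'I_N, nat_of_ord k0 = 0%N ->
        al k0 + be k0 = al k + be k + 1 + (-1) ^+ (nat_of_ord k).+1) ->
  indep3 (fun x : R => -1 < x < 1) (fun k x => jacobi_w (al k) (be k) x).
Proof.
move=> nint rel c0 c1 c2 H l.
have N0 : (0 < N)%N by apply: leq_ltn_trans (ltn_ord l).
pose k0 := Ordinal N0.
pose S := al k0 + be k0.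
pose K (k : 'I_N) : nat := if odd k then 2%N else 0%N.
have beE : forall k, be k = S - al k - (K k)%:R.
  move=> k; rewrite /S (rel k0 k erefl) /K exprS -signr_odd.
  by case: (odd k); rewrite /= ?expr1 ?expr0; ring.
have nint' : forall k m, k != m -> ~ is_integer (al k - al m).
  move=> k m km [z hz]; case: (nint k m km) => h; apply: h; first by exists z.
  exists (- z - (K k)%:Z + (K m)%:Z).
  rewrite !beE rmorphD rmorphB /= rmorphN /= -hz.
  have -> : ((K k)%:Z%:~R : R) = (K k)%:R by [].
  have -> : ((K m)%:Z%:~R : R) = (K m)%:R by [].
  ring.
pose q0 k := c0 k + c1 k + c2 k.
pose q1 k := 2 * (c0 k - c2 k).
pose q2 k := c0 k - c1 k + c2 k.
pose r (k : 'I_N) : seq R := if odd k then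
  [:: q0 k; 2 * q0 k + q1 k; q0 k + 2 * q1 k + q2 k; q1 k + 2 * q2 k; q2 k]
  else [:: q0 k; q1 k; q2 k; 0; 0].
pose d k (j : 'I_5) := 2 `^ (S - (K k)%:R) * nth 0 (r k) j.
have Hd := @polypow_indep R N 5 al d nint'.
have Hd2 : forall j : 'I_5, nth 0 (r l) j = 0.
  move=> j; suff : d l j = 0.
    by move/eqP; rewrite /d mulf_eq0 gt_eqF ?powR_gt0 //= => /eqP.
  apply: Hd => t t0.
  have t1 : 0 < 1 + t by lra.
  have rng : -1 < (1 - t) / (1 + t) < 1.
    by rewrite ltr_pdivrMr // ltr_pdivlMr //; apply/andP; split; lra.
  have := H _ rng.
  move=> /(congr1 (fun z => z * ((1 + t) ^+ 2 * (1 + t) `^ S))).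
  rewrite mul0r mulr_suml => Hs; rewrite -[RHS]Hs.
  apply: eq_bigr => k _; rewrite beE jac_term // /d.
  under eq_bigr => i _ do rewrite -mulrA.
  rewrite -mulr_sumr.
  rewrite -!mulrA; congr (_ * _); rewrite !mulrA; congr (_ * _).
  rewrite /r /K /q0 /q1 /q2; case: (odd k); rewrite /= sum5; ring.
have e0 := Hd2 (@Ordinal 5 0 isT).
have e1 := Hd2 (@Ordinal 5 1 isT).
have e2 := Hd2 (@Ordinal 5 2 isT).
have e4 := Hd2 (@Ordinal 5 4 isT).
move: e0 e1 e2 e4; rewrite /r /q0 /q1 /q2; case: (odd l) => /= e0 e1 e2 e4.
  split; [lra | split; lra].
split; [lra | split; lra].
Qed.

Lemma zero_lemma (F : fieldType) (n : nat) (M X : 'M[F]_n) (rowsel : pred 'I_n)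
  (colsel : 'I_n -> Prop) (m l : 'I_n) :
  M \in unitmx ->
  (forall r l', rowsel r -> colsel l' -> M r l' = 0 /\ (M *m X) r l' = 0) ->
  (forall r l', ~~ rowsel r -> ~ colsel l' -> M r l' = 0) ->
  ~ colsel m -> colsel l -> X m l = 0.
Proof.
move=> Mu H1 H2 nm cl.
pose c : 'rV[F]_n := 'e_m *m invmx M.
have cM : c *m M = delta_mx 0 m by rewrite /c mulmxKV.
pose c' : 'rV[F]_n := \row_r (if rowsel r then 0 else c 0 r).
have c'M : c' *m M = 0.
  apply/rowP => l'; rewrite !mxE.
  have [cl'|ncl'] := pselect (colsel l').
    have -> : \sum_j c' 0 j * M j l' = \sum_j c 0 j * M j l'.
      apply: eq_bigr => r _; rewrite mxE; case: ifP => // rs.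
      by rewrite (H1 r l' rs cl').1 !mulr0.
    have := congr1 (fun A : 'rV[F]_n => A 0 l') cM; rewrite !mxE => ->.
    have ml : m != l' by apply/eqP => e; apply: nm; rewrite e.
    by rewrite eq_sym (negbTE ml) andbF.
  apply: big1 => r _; rewrite mxE; case: ifPn => rs; first by rewrite mul0r.
  by rewrite (H2 r l' rs ncl') mulr0.
have c'0 : c' = 0 by rewrite -[c'](mulmxK Mu) c'M mul0mx.
have : ((delta_mx 0 m : 'rV[F]_n) *m X) 0 l = X m l.
  by rewrite -rowE mxE.
move=> <-; rewrite -cM -mulmxA mxE.
apply: big1 => r _.
case: (boolP (rowsel r)) => rs.
  by rewrite (H1 r l rs cl).2 mulr0.
have := congr1 (fun A : 'rV[F]_n => A 0 r) c'0; rewrite !mxE (negbTE rs) => ->.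
by rewrite mul0r.
Qed.

Lemma entry_formula (R : realType) (N : nat) (a : nat -> R) (w : 'I_N -> R -> R)
  (M : 'M[R[i]]_N) (x : R) (i j : 'I_N) :
  let Ac := map_mx (fun r : R => real_complex R r) (Amat N a) in
  (M *m map_mx (fun r : R => real_complex R r) (Wmat a w x) *m adjmx M) i j =
  \sum_l (M i l + real_complex R x * (M *m Ac) i l) * real_complex R (w l x) *
         ((M j l)^*%C + real_complex R x * ((M *m Ac) j l)^*%C).
Proof.
rewrite /=.
have erc : (fun r : R => real_complex R r) = real_complex R by [].
rewrite !erc.
set Ac := map_mx (real_complex R) (Amat N a).
pose rc := real_complex R.
set Mc := map_mx (@conjc R) M.
have eT : map_mx rc (Tmat N a x) = 1%:M + rc x *: Ac.
  by rewrite /Tmat map_mxD map_mx1 map_mxZ.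
have eW : map_mx rc (Wmat a w x) =
   (1%:M + rc x *: Ac) *m diag_mx (\row_l rc (w l x)) *m (1%:M + rc x *: Ac)^T.
  rewrite /Wmat !map_mxM -map_trmx eT map_diag_mx; congr (_ *m diag_mx _ *m _).
  by apply/rowP => l; rewrite !mxE.
have eAc : map_mx (@conjc R) Ac = Ac.
  by apply/matrixP => p q; rewrite !mxE conjc_real.
rewrite eW /adjmx -/Mc !mulmxA -mulmxA -trmx_mul.
rewrite !mulmxDr !mulmx1 -!scalemxAr.
have -> : Mc *m Ac = map_mx (@conjc R) (M *m Ac) by rewrite map_mxM eAc.
rewrite mul_mx_diag mxE; apply: eq_bigr => l _; rewrite !mxE.
done.
Qed.


Lemma Re_sum (R : rcfType) (I : finType) (f : I -> R[i]) :
  complex.Re (\sum_l f l) = \sum_l complex.Re (f l).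
Proof.
apply: (big_morph (@complex.Re R) (id1 := 0) (op1 := +%R)) => //.
by move=> [a b] [c d].
Qed.

Lemma Im_sum (R : rcfType) (I : finType) (f : I -> R[i]) :
  complex.Im (\sum_l f l) = \sum_l complex.Im (f l).
Proof.
apply: (big_morph (@complex.Im R) (id1 := 0) (op1 := +%R)) => //.
by move=> [a b] [c d].
Qed.

Lemma sep_from_indep (R : realType) (N : nat) (I : R -> Prop) (w : 'I_N -> R -> R)
  (p s q u : 'I_N -> R[i]) :
  indep3 I w ->
  (forall x, I x -> \sum_l (p l + real_complex R x * s l) * real_complex R (w l x) *
      (q l + real_complex R x * u l) = 0) ->
  forall l, (p l = 0 /\ s l = 0) \/ (q l = 0 /\ u l = 0).
Proof.
move=> ind H l.
have HRe := ind (fun l => complex.Re (p l * q l)) (fun l => complex.Re (p l * u l + s l * q l))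
   (fun l => complex.Re (s l * u l)).
have HIm := ind (fun l => complex.Im (p l * q l)) (fun l => complex.Im (p l * u l + s l * q l))
   (fun l => complex.Im (s l * u l)).
have [r1 [r2 r3]] : [/\ complex.Re (p l * q l) = 0, complex.Re (p l * u l + s l * q l) = 0 &
                  complex.Re (s l * u l) = 0].
  have := HRe _ l; case; last by move=> -> [-> ->].
  move=> x Ix; rewrite -[RHS](congr1 (@complex.Re R) (H x Ix)) Re_sum.
  apply: eq_bigr => k _.
  case: (p k) => [p1 p2]; case: (s k) => [s1 s2]; case: (q k) => [q1 q2];
  case: (u k) => [u1 u2] /=; ring.
have [i1 [i2 i3]] : [/\ complex.Im (p l * q l) = 0, complex.Im (p l * u l + s l * q l) = 0 &
                  complex.Im (s l * u l) = 0].
  have := HIm _ l; case; last by move=> -> [-> ->].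
  move=> x Ix; rewrite -[RHS](congr1 (@complex.Im R) (H x Ix)) Im_sum.
  apply: eq_bigr => k _.
  case: (p k) => [p1 p2]; case: (s k) => [s1 s2]; case: (q k) => [q1 q2];
  case: (u k) => [u1 u2] /=; ring.
have z0 : forall z : R[i], complex.Re z = 0 -> complex.Im z = 0 -> z = 0.
  by move=> [a b] /= -> ->.
have e1 := z0 _ r1 i1; have e2 := z0 _ r2 i2; have e3 := z0 _ r3 i3.
have [p0|pn] := eqVneq (p l) 0.
  rewrite p0 mul0r add0r in e2.
  have [s0|sn] := eqVneq (s l) 0; first by left.
  move/eqP: e2; rewrite mulf_eq0 (negbTE sn) /= => /eqP q0.
  move/eqP: e3; rewrite mulf_eq0 (negbTE sn) /= => /eqP u0.
  by right.
move/eqP: e1; rewrite mulf_eq0 (negbTE pn) /= => /eqP q0.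
rewrite q0 mulr0 addr0 in e2.
move/eqP: e2; rewrite mulf_eq0 (negbTE pn) /= => /eqP u0.
by right.
Qed.

Lemma reduce (R : realType) (N : nat) (a : nat -> R) (I : R -> Prop) (w : 'I_N -> R -> R) :
  (forall j, (1 <= j < N)%N -> a j != 0) -> indep3 I w -> irreducible_weight I (Wmat a w).
Proof.
move=> anz ind [M [Mu [k [/andP[k0 kN] HM]]]].
have erc : (fun r : R => real_complex R r) = real_complex R by [].
set Ac := map_mx (real_complex R) (Amat N a).
set B := M *m Ac.
have sep : forall i j l : 'I_N, (i < k)%N -> (k <= j)%N ->
    (M i l = 0 /\ B i l = 0) \/ (M j l = 0 /\ B j l = 0).
  move=> i j l ik kj.
  have Hs : forall x, I x -> \sum_l (M i l + real_complex R x * B i l) *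
      real_complex R (w l x) * ((M j l)^*%C + real_complex R x * (B j l)^*%C) = 0.
    move=> x Ix; have := entry_formula a w M x i j; rewrite /= erc -/Ac -/B => <-.
    by apply: HM => //; rewrite ik; apply/negP => /= jk; move: (leq_trans jk kj); rewrite ltnn.
  have := @sep_from_indep R N I w (fun l => M i l) (fun l => B i l)
     (fun l => (M j l)^*%C) (fun l => (B j l)^*%C) ind Hs l.
  case; first by left.
  by move=> [/eqP h1 /eqP h2]; right; move: h1 h2; rewrite !conjc_eq0 => /eqP -> /eqP ->.
pose TD (l : 'I_N) := forall i : 'I_N, (i < k)%N -> M i l = 0 /\ B i l = 0.
have nTD : forall l, ~ TD l -> forall j : 'I_N, (k <= j)%N -> M j l = 0 /\ B j l = 0.
  move=> l ntd j kj; case: (pselect (M j l = 0 /\ B j l = 0)) => // hj.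
  by exfalso; apply: ntd => i ik; case: (sep i j l ik kj).
have Az1 : forall m l, TD l -> ~ TD m -> Ac m l = 0.
  move=> m l tl nm.
  apply: (@zero_lemma _ N M Ac (fun r => (r < k)%N) TD m l Mu) => //.
  - by move=> r l' rk tl'; apply: tl'.
  - by move=> r l' rk ntl'; apply: (nTD l' ntl' r _).1; rewrite leqNgt.
have Az2 : forall m l, TD m -> ~ TD l -> Ac m l = 0.
  move=> m l tm nl.
  apply: (@zero_lemma _ N M Ac (fun r => ~~ (r < k)%N) (fun l => ~ TD l) m l Mu) => //.
  - by move=> r l' rk ntl'; apply: (nTD l' ntl' r); rewrite leqNgt.
  - move=> r l' rk nntl'; have tl' : TD l'.
      by case: (pselect (TD l')) => // h; exfalso; apply: nntl'.
    by apply: (tl' r _).1; move: rk; rewrite negbK.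
have rowz : forall i : 'I_N, ~ (forall l, M i l = 0).
  move=> i Hi; have := congr1 (fun A : 'M[R[i]]_N => A i i) (mulmxV Mu).
  rewrite !mxE eqxx /= big1; last by move=> r _; rewrite Hi mul0r.
  by move/eqP; rewrite eq_sym oner_eq0.
have N0 : (0 < N)%N by apply: leq_ltn_trans kN.
have [l1 t1] : exists l, TD l.
  case: (pselect (exists l, TD l)) => // h; exfalso.
  apply: (rowz (Ordinal kN)) => l.
  have ntl : ~ TD l by move=> tl; apply: h; exists l.
  by apply: (nTD l ntl (Ordinal kN) _).1.
have [l2 t2] : exists l, ~ TD l.
  case: (pselect (exists l, ~ TD l)) => // h; exfalso.
  apply: (rowz (Ordinal N0)) => l.
  have tl : TD l by case: (pselect (TD l)) => // ntl; exfalso; apply: h; exists l.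
  exact: (tl (Ordinal N0) k0).1.
have [p [q [pq dif]]] : exists p q : 'I_N, q = p.+1 :> nat /\
    ((TD p /\ ~ TD q) \/ (TD q /\ ~ TD p)).
  case: (pselect (exists p q : 'I_N, q = p.+1 :> nat /\
    ((TD p /\ ~ TD q) \/ (TD q /\ ~ TD p)))) => // h; exfalso.
  have step : forall p q : 'I_N, q = p.+1 :> nat -> (TD p <-> TD q).
    move=> p q e; split => tp.
      case: (pselect (TD q)) => // nq; exfalso; apply: h; exists p, q; split=> //; by left.
    case: (pselect (TD p)) => // np; exfalso; apply: h; exists p, q; split=> //; by right.
  have all : forall n (hn : (n < N)%N), TD (Ordinal hn) <-> TD (Ordinal N0).
    elim=> [|n IH] hn.
      by have -> : Ordinal hn = Ordinal N0 by apply: val_inj.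
    have hn' : (n < N)%N by apply: ltnW.
    have := step (Ordinal hn') (Ordinal hn) erefl.
    have := IH hn'; tauto.
  have := all _ (ltn_ord l1); have := all _ (ltn_ord l2).
  have -> : Ordinal (ltn_ord l1) = l1 by apply: val_inj.
  have -> : Ordinal (ltn_ord l2) = l2 by apply: val_inj.
  tauto.
have [e1 e2] : Ac p q = 0 /\ Ac q p = 0.
  case: dif => [[tp nq]|[tq np]]; split.
  - exact: Az2.
  - exact: Az1.
  - exact: Az1.
  - exact: Az2.
move: e1 e2; rewrite !mxE.
have qN : (p.+1 < N)%N by rewrite -pq ltn_ord.
have anz' : a p.+1 != 0 by apply: anz; rewrite /= qN.
have nz : (real_complex R (a p.+1) == 0) = false.
  by rewrite eq_complex /= eqxx andbT; apply/negbTE.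
case: (boolP (odd p)) => op.
  move=> _ /eqP.
  have oq : odd q = false by rewrite pq /= op.
  have e1 : (nat_of_ord p == (nat_of_ord q).+1) = false by rewrite pq ltn_eqF.
  have e2 : ((nat_of_ord p).+1 == nat_of_ord q) by rewrite pq.
  have q0 : (0 < nat_of_ord q)%N by rewrite pq.
  by rewrite oq e1 e2 q0 /= pq nz.
move=> /eqP; rewrite pq eqxx /= nz.
by [].
Qed.

Theorem proposition3p7 (R : realType) (N : nat) (a : nat -> R) :
  (2 <= N)%N ->
  (forall j : nat, (1 <= j < N)%N -> a j != 0) ->
  (* Hermite *)
  (forall b : 'I_N -> R, injective b ->
     irreducible_weight (fun _ : R => True)
       (Wmat a (fun k x => hermite_w (b k) x))) /\
  (* Laguerre *)
  (forall al : 'I_N -> R, (forall k, -1 < al k) ->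
     (forall k l : 'I_N, k != l -> ~ is_integer (al k - al l)) ->
     irreducible_weight (fun x : R => 0 < x)
       (Wmat a (fun k x => laguerre_w (al k) x))) /\
  (* Jacobi *)
  (forall al be : 'I_N -> R, (forall k, -1 < al k) -> (forall k, -1 < be k) ->
     (forall k l : 'I_N, k != l ->
        ~ is_integer (al k - al l) \/ ~ is_integer (be k - be l)) ->
     (forall k0 k : 'I_N, nat_of_ord k0 = 0%N ->
        al k0 + be k0 = al k + be k + 1 + (-1) ^+ (nat_of_ord k).+1) ->
     irreducible_weight (fun x : R => -1 < x < 1)
       (Wmat a (fun k x => jacobi_w (al k) (be k) x))).
Proof.
move=> N2 anz; split; last split.
- move=> b binj; apply: reduce => //; exact: hermite_indep3.
- move=> al _ nint; apply: reduce => //; exact: laguerre_indep3.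
- move=> al be _ _ nint rel; apply: reduce => //; exact: jacobi_indep3.
Qed.
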